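(* Let $k\ge 2$, let $H$ be a digraph (possibly with loops), and let $D$ be an $H$-colored local tournament. If every directed cycle in $D$ has $H$-length at most $k-2$, then $D$ has a $(k,H)$-kernel.
   Context: All digraphs are finite. A local tournament is a digraph $D$ such that for every vertex $x$, both the subdigraph induced by the in-neighbourhood $N^-(x)$ and that induced by the out-neighbourhood $N^+(x)$ are tournaments (every two distinct vertices joined by exactly one arc). $D$ has no loops and comes with a map $\rho: A(D)\to V(H)$. For a walk $W=(x_0,\ldots,x_n)$ in $D$, there is an obstruction on $x_i$ if $(\rho(x_{i-1},x_i),\rho(x_i,x_{i+1})) \notin A(H)$; for an open walk this is considered at internal vertices $x_i$, $1\le i\le n-1$, for a closed walk (such as a cycle) at all $i\in\{0,\ldots,n-1\}$ with indices modulo $n$. $O_H(W)$ is the set of indices with an obstruction; the $H$-length is $l_H(W)=|O_H(W)|+1$ for open $W$ and $|O_H(W)|$ for closed $W$. A $(k,H)$-kernel ($k\ge2$) is a set $S\subseteq V(D)$ such that for every two distinct $u,v\in S$ every directed $uv$-path in $D$ has $H$-length at least $k$, and for every $x\in V(D)\setminus S$ there is a directed path from $x$ to a vertex of $S$ of $H$-length at most $k-1$. *)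

(* Defs.v *)
From mathcomp Require Import all_boot.
Set Implicit Arguments. Unset Strict Implicit. Unset Printing Implicit Defensive.

(* A digraph D on a finite vertex type V is given by its arc relation [arc];
   H is a digraph (possibly with loops) on a finite type C of colours, given by
   its arc relation [H]; rho : V -> V -> C is the colouring of arcs (only its
   values on arcs of D matter). *)

Definition tournament_on {V : finType} (arc : rel V) (A : pred V) : Prop :=
  forall u v, A u -> A v -> u != v -> (arc u v (+) arc v u).

Definition local_tournament {V : finType} (arc : rel V) : Prop :=
  irreflexive arc /\
  forall x, tournament_on arc (fun y => arc y x) /\
            tournament_on arc (fun y => arc x y).

(* A walk is represented as x :: p (vertices x_0 = x, x_1, ..., x_n). *)
Definition arc_cols {V C : Type} (rho : V -> V -> C) (x : V) (p : seq V) : seq C :=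
  pairmap rho x p.

(* number of obstructions at internal vertices of the open walk x :: p *)
Definition obs_open {V C : Type} (H : rel C) (rho : V -> V -> C) x p : nat :=
  let cs := arc_cols rho x p in
  count (fun ab : C * C => ~~ H ab.1 ab.2) (zip cs (behead cs)).

Definition hlen_open {V C : Type} (H : rel C) (rho : V -> V -> C) x p : nat :=
  (obs_open H rho x p).+1.

(* closed walk x_0 = x, x_1, ..., x_{n-1} (p = [x_1;...;x_{n-1}]), back to x:
   obstructions at every vertex, indices mod n *)
Definition hlen_closed {V C : Type} (H : rel C) (rho : V -> V -> C) x p : nat :=
  let cs := arc_cols rho x (rcons p x) in
  count (fun ab : C * C => ~~ H ab.1 ab.2) (zip cs (rot 1 cs)).

Definition dipath {V : finType} (arc : rel V) (x : V) (p : seq V) : bool :=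
  path arc x p && uniq (x :: p).

Definition dicycle {V : finType} (arc : rel V) (x : V) (p : seq V) : bool :=
  path arc x (rcons p x) && uniq (x :: p).

Definition kH_kernel {V C : finType} (arc : rel V) (H : rel C) (rho : V -> V -> C)
    (k : nat) (S : {set V}) : Prop :=
  (forall u v, u \in S -> v \in S -> u != v ->
     forall p, dipath arc u p -> last u p = v -> k <= hlen_open H rho u p) /\
  (forall x, x \notin S ->
     exists p, [/\ dipath arc x p, last x p \in S & hlen_open H rho x p <= k - 1]).

(* Main.v *)
Require Import Defs.
From mathcomp Require Import all_boot zify.
From Stdlib Require Import Classical.
Set Implicit Arguments. Unset Strict Implicit. Unset Printing Implicit Defensive.

Lemma count_zip_cat_le (T : Type) (Q : pred (T * T)) (s s' t t' : seq T) :
  count Q (zip s t) <= count Q (zip (s ++ s') (t ++ t')).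
Proof.
elim: s t => [|x s IH] [|y t] //=.
by rewrite leq_add2l.
Qed.

Lemma count_obs_le (T : Type) (Q : pred (T * T)) (c1 c2 : seq T) :
  count Q (zip c1 (behead c1)) <= count Q (zip (c1 ++ c2) (rot 1 (c1 ++ c2))).
Proof.
case: c1 => [|x c] //=.
rewrite /rot /= drop0 take0.
have := count_zip_cat_le Q (x :: c) c2 c (c2 ++ [:: x]).
by rewrite -catA.
Qed.

Lemma cycle_sub_hlen (V C : finType) (H : rel C) (rho : V -> V -> C) (a b : V) p1 p2 :
  hlen_open H rho a (rcons p1 b) <= (hlen_closed H rho a (p1 ++ b :: p2)).+1.
Proof.
rewrite /hlen_open /hlen_closed /obs_open /arc_cols ltnS.
have -> : rcons (p1 ++ b :: p2) a = rcons p1 b ++ rcons p2 a by rewrite rcons_cat cat_rcons.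
rewrite pairmap_cat.
exact: count_obs_le.
Qed.

Lemma trans_split (T : eqType) (P : pred T) x s :
  P x -> has (predC P) s -> exists s1 y s2, s = s1 ++ y :: s2 /\ P (last x s1) /\ ~~ P y.
Proof.
elim: s x => [|y s IH] x //= Px hs.
case Py: (P y); last by exists [::], y, s; rewrite Py.
move: hs; rewrite /= Py /= => hs.
have [s1 [z [s2 [-> [h1 h2]]]]] := IH y Py hs.
by exists (y :: s1), z, s2.
Qed.

Lemma rcons_split (T : eqType) (a y : T) p s1 s2 :
  rcons p a = s1 ++ y :: s2 -> exists p2, p = s1 ++ p2 /\ head a p2 = y.
Proof.
elim: s1 p => [|z s1 IH] [|x p] /=.
- by case=> <- _; exists [::].
- by case=> <- _; exists (x :: p).
- by case=> _ /(congr1 size); rewrite size_cat /= addnS.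
- case=> -> /IH [p2 [-> h]]; by exists p2.
Qed.

Lemma cycle_trans (T : eqType) (P : pred T) a p : has P (a :: p) ->
  all P (a :: p) \/ exists p1 p2, p = p1 ++ p2 /\ P (last a p1) /\ ~~ P (head a p2).
Proof.
move=> hP; have [Pa|nPa] := boolP (P a).
  case hallp : (all P p); first by left; rewrite /= Pa hallp.
  right.
  have hs : has (predC P) (rcons p a) by rewrite has_rcons /= Pa /= has_predC hallp.
  have [s1 [y [s2 [e [h1 h2]]]]] := trans_split Pa hs.
  have [p2 [e2 hy]] := rcons_split e.
  by exists s1, p2; rewrite hy.
right.
move: hP; rewrite /= (negbTE nPa) /= => /hasP [c cp Pc].
case/splitPr: cp => q1 q2.
have hs : has (predC P) (rcons q2 a) by rewrite has_rcons /= nPa.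
have [s1 [y [s2 [e [h1 h2]]]]] := trans_split Pc hs.
have e' : rcons (q1 ++ c :: q2) a = (q1 ++ c :: s1) ++ y :: s2
  by rewrite rcons_cat rcons_cons e -catA.
have [p2 [e2 hy]] := rcons_split e'.
exists (q1 ++ c :: s1), p2; rewrite e2 last_cat /= hy; split => //.
Qed.

Lemma pred_split (T : eqType) (a c : T) p : c \in a :: p ->
  exists p1 p2, p = p1 ++ p2 /\ head a p2 = c.
Proof.
rewrite inE => /orP[/eqP -> | cp]; first by exists p, [::]; rewrite cats0.
case/splitPr: cp => q1 q2; by exists q1, (c :: q2).
Qed.

Lemma head_in (T : eqType) (a : T) p1 p2 : head a p2 \in a :: p1 ++ p2.
Proof. case: p2 => [|y q] /=; first exact: mem_head.
by rewrite inE mem_cat inE eqxx !orbT. Qed.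

Lemma path_rcons_head (T : Type) (e : rel T) u w a p2 :
  path e u (rcons p2 a) -> e w (head a p2) -> path e w (rcons p2 a).
Proof. by case: p2 => [|y q] /= => [_ -> // | /andP[_ ->] ->]. Qed.

Section LT.
Variables (V : finType) (arc : rel V).
Hypothesis irr : irreflexive arc.
Hypothesis outT : forall x, tournament_on arc (fun y => arc x y).

Lemma cyc_arc a p p1 p2 : dicycle arc a p -> p = p1 ++ p2 ->
  arc (last a p1) (head a p2).
Proof.
move=> /andP[pc _] e; move: pc; rewrite e rcons_cat cat_path => /andP[_].
by case: p2 {e} => [|y q] /= => [/andP[] | /andP[]].
Qed.

Lemma insert_cycle a p1 p2 h t :
  dicycle arc a (p1 ++ p2) -> arc (last a p1) h -> path arc h t ->
  arc (last h t) (head a p2) ->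
  uniq (h :: t) -> ~~ has (fun z => z \in a :: p1 ++ p2) (h :: t) ->
  dicycle arc a (p1 ++ h :: t ++ p2).
Proof.
rewrite /dicycle => /andP[pc uc] ah pht al ut nin.
apply/andP; split.
  move: pc; rewrite !rcons_cat !cat_path /= => /andP[-> pc2].
  rewrite ah rcons_cat cat_path pht /=; exact: path_rcons_head pc2 al.
have pe : perm_eq ((a :: p1) ++ (h :: t) ++ p2) ((a :: p1 ++ p2) ++ (h :: t))
  by rewrite perm_catCA perm_catC perm_refl.
rewrite -cat_cons (perm_uniq pe) cat_uniq ut uc andbT.
exact: nin.
Qed.

Lemma extend_cycle a p o t c' :
  dicycle arc a p -> (exists2 c, c \in a :: p & arc c o) ->
  path arc o (rcons t c') -> uniq (o :: t) ->
  ~~ has (fun z => z \in a :: p) (o :: t) -> c' \in a :: p ->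
  exists p', dicycle arc a p' /\ size p < size p'.
Proof.
move=> dc [c cin aco] pt ut nin cin'.
have hP : has (fun z => arc z o) (a :: p) by apply/hasP; exists c.
case: (cycle_trans hP) => [hall | [p1 [p2 [e [h1 h2]]]]].
  have [p1 [p2 [e hc]]] := pred_split cin'.
  move: pt; rewrite rcons_path => /andP[pt lt].
  exists (p1 ++ o :: t ++ p2); split; last by rewrite e !size_cat /= size_cat addnS ltnS leq_add2l leq_addl.
  subst p; apply: insert_cycle => //.
  - by move/allP: hall; apply; rewrite -cat_cons mem_cat mem_last.
  - by move: lt; rewrite -hc.
exists (p1 ++ o :: [::] ++ p2); split; last by rewrite e !size_cat /= addnS ltnS.
subst p; apply: insert_cycle => //=.
- have := @outT (last a p1) (head a p2) o (cyc_arc dc (erefl _)) h1.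
  have hne : head a p2 != o.
    apply/eqP => ho; move: nin; rewrite /= -ho head_in //.
  by move=> /(_ hne); rewrite (negbTE h2).
- by move: nin => /= /norP[]; rewrite orbF.
Qed.

End LT.

Section LT2.
Variables (V : finType) (arc : rel V).
Hypothesis irr : irreflexive arc.
Hypothesis outT : forall x, tournament_on arc (fun y => arc x y).

Lemma exit_cycle (Cy : pred V) c q : Cy c -> path arc c q -> ~~ Cy (last c q) ->
  exists c' o, [/\ Cy c', ~~ Cy o, arc c' o & connect arc o (last c q)].
Proof.
elim: q c => [|y q IH] c /=; first by move=> ->.
move=> Cc /andP[acy pq] nl.
case Cyy: (Cy y); first exact: IH.
exists c, y; split => //; first by rewrite Cyy.
by apply/connectP; exists q.
Qed.

Lemma enter_cycle (Cy : pred V) o q : ~~ Cy o -> path arc o q -> Cy (last o q) ->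
  exists q', path (fun x y => arc x y && ~~ Cy x) o q' /\ Cy (last o q').
Proof.
elim: q o => [|y q IH] o /=; first by move=> /negbTE ->.
move=> nCo /andP[aoy pq] l.
case Cyy: (Cy y); first by exists [:: y]; rewrite /= aoy nCo Cyy.
have [q' [p1 p2]] := IH y (negbT Cyy) pq l.
by exists (y :: q'); rewrite /= aoy nCo p1.
Qed.

Lemma path_off (Cy : pred V) x s : path (fun x y => arc x y && ~~ Cy x) x s ->
  all (predC Cy) (belast x s).
Proof.
elim: s x => [|y s IH] x //= /andP[/andP[_ ->] ps] /=; exact: IH.
Qed.

Lemma longer_cycle a p b : dicycle arc a p -> b \notin a :: p ->
  connect arc a b -> connect arc b a ->
  exists p', dicycle arc a p' /\ size p < size p'.
Proof.
move=> dc nb cab cba.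
pose Cy := fun z => z \in a :: p.
have [q pq lq] := connectP cab.
have nl : ~~ Cy (last a q) by rewrite -lq.
have [c' [o [Cc' nCo aco cob]]] := @exit_cycle Cy a q (mem_head _ _) pq nl.
have coa : connect arc o a by apply: connect_trans cba; rewrite lq.
have [r pr lr] := connectP coa.
have lr' : Cy (last o r) by rewrite -lr /Cy mem_head.
have [q' [pq' lq']] := @enter_cycle Cy o r nCo pr lr'.
case: (shortenP pq') lq' => s ps us _ ls.
case/lastP: s ps us ls => [|t c''] ps us ls.
  by move: ls nCo => /= ->.
move: ls; rewrite last_rcons => ls.
have offt := path_off ps; rewrite belast_rcons in offt.
apply: (@extend_cycle V arc outT a p o t c'') => //.
- by exists c'.
- by apply: sub_path ps => x y /andP[].
- by move: us; rewrite -rcons_cons rcons_uniq => /andP[].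
- by rewrite -all_predC.
Qed.

End LT2.

Section LT3.
Variables (V : finType) (arc : rel V).
Hypothesis irr : irreflexive arc.
Hypothesis outT : forall x, tournament_on arc (fun y => arc x y).

Lemma cycle_size a p : dicycle arc a p -> size p < #|V|.
Proof.
move=> /andP[_ /card_uniqP e]; have := max_card (mem (a :: p)).
by rewrite e.
Qed.

Lemma cycle_through a b : a != b -> connect arc a b -> connect arc b a ->
  exists p, dicycle arc a p /\ b \in p.
Proof.
move=> nab cab cba.
have [p0 dc0] : exists p0, dicycle arc a p0.
  have [q pq lq] := connectP cab.
  case: q pq lq => [|a1 q] /=; first by move=> _ e; rewrite e eqxx in nab.
  move=> /andP[aa1 pq] lq.
  have ca1a : connect arc a1 a.
    by apply: connect_trans cba; apply/connectP; exists q.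
  have [r pr lr] := connectP ca1a.
  case: (shortenP pr) lr => s ps us _ ls.
  case/lastP: s ps us ls => [|t a2] ps us ls.
    by move: ls aa1 => /= <-; rewrite irr.
  move: ls; rewrite last_rcons => ls; subst a2.
  exists (a1 :: t); rewrite /dicycle /= aa1 ps /=.
  by move: us; rewrite -rcons_cons rcons_uniq.
suff : forall n p, #|V| - size p <= n -> dicycle arc a p ->
    exists p', dicycle arc a p' /\ b \in p'.
  by move=> /(_ _ p0 (leqnn _) dc0).
elim=> [|n IH] p hn dc.
  have := cycle_size dc; lia.
case bp: (b \in a :: p).
  exists p; split => //; move: bp; rewrite inE eq_sym (negbTE nab).
  by [].
have [p' [dc' lt]] := @longer_cycle V arc outT a p b dc (negbT bp) cab cba.
apply: (IH p') => //.
have := cycle_size dc'.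
lia.
Qed.

End LT3.

Lemma short_path (V C : finType) (arc : rel V) (H : rel C) (rho : V -> V -> C) (k : nat) :
  2 <= k -> irreflexive arc -> (forall x, tournament_on arc (fun y => arc x y)) ->
  (forall x p, dicycle arc x p -> hlen_closed H rho x p <= k - 2) ->
  forall a b, a != b -> connect arc a b -> connect arc b a ->
  exists p, [/\ dipath arc a p, last a p = b & hlen_open H rho a p <= k - 1].
Proof.
move=> k2 irr outT hcyc a b nab cab cba.
have [p [dc bp]] := @cycle_through V arc irr outT a b nab cab cba.
case/splitPr: bp dc => p1 p2 dc.
exists (rcons p1 b); split; last first.
- have := cycle_sub_hlen H rho a b p1 p2; have := hcyc _ _ dc => h1 h2.
  apply: (leq_trans h2); have <- : (k - 2).+1 = k - 1 by lia.
  by rewrite ltnS.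
- by rewrite last_rcons.
move: dc => /andP[pc uc]; apply/andP; split.
  by move: pc; rewrite rcons_cat /= -cat_rcons cat_path => /andP[].
by move: uc; rewrite -cat_rcons -cat_cons cat_uniq => /andP[].
Qed.

Section Kern.
Variables (V C : finType) (arc : rel V) (H : rel C) (rho : V -> V -> C) (k : nat).
Hypothesis claimA : forall a b, a != b -> connect arc a b -> connect arc b a ->
  exists p, [/\ dipath arc a p, last a p = b & hlen_open H rho a p <= k - 1].

Definition short_to (S : {set V}) x :=
  exists p, [/\ dipath arc x p, last x p \in S & hlen_open H rho x p <= k - 1].

Definition indep (S : {set V}) :=
  forall u v, u \in S -> v \in S -> u != v ->
     forall p, dipath arc u p -> last u p = v -> k <= hlen_open H rho u p.

Lemma kernel_ind n : forall A : {set V}, #|A| <= n ->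
  (forall x y, x \in A -> connect arc x y -> y \in A) ->
  exists S : {set V}, [/\ S \subset A, indep S & forall x, x \in A -> x \notin S -> short_to S x].
Proof.
elim: n => [|n IH] A cA clA; case: (set_0Vmem A) => [-> | [x0 x0A]].
- exists set0; split => //; first by move=> u v; rewrite in_set0.
  by move=> x; rewrite in_set0.
- have : 0 < #|A| by apply/card_gt0P; exists x0.
  lia.
- exists set0; split => //; first by move=> u v; rewrite in_set0.
  by move=> x; rewrite in_set0.
pose F := fun z => #|[set w | connect arc z w]|.
case: (@arg_maxnP V x0 (fun z => z \in A) F x0A) => x xA maxx.
have back : forall y, y \in A -> connect arc y x -> connect arc x y.
  move=> y yA cyx.
  have sub : [set w | connect arc x w] \subset [set w | connect arc y w].
    by apply/subsetP => w; rewrite !inE => cxw; apply: connect_trans cyx cxw.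
  have : [set w | connect arc x w] == [set w | connect arc y w].
    by rewrite eqEcard sub /=; exact: maxx.
  move/eqP => e.
  have : y \in [set w | connect arc y w] by rewrite inE connect0.
  by rewrite -e inE.
pose A' := A :\: [set y | connect arc y x].
have clA' : forall z w, z \in A' -> connect arc z w -> w \in A'.
  move=> z w; rewrite !inE => /andP[nzx zA] czw.
  rewrite (clA z w zA czw) andbT; apply: contra nzx => cwx.
  exact: connect_trans czw cwx.
have cA' : #|A'| <= n.
  have : A' \subset A :\ x.
    apply/subsetP => z; rewrite !inE => /andP[nzx ->]; rewrite andbT.
    by apply: contra nzx => /eqP ->; exact: connect0.
  move/subset_leq_card; have := cardsD1 x A; rewrite xA; lia.
have [S' [sS' iS' aS']] := IH A' cA' clA'.
have sS'A : S' \subset A by apply: subset_trans sS' (subsetDl _ _).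
have S'nx : forall u, u \in S' -> ~~ connect arc u x.
  by move=> u /(subsetP sS'); rewrite !inE => /andP[].
have monoS : forall z (S : {set V}), S' \subset S -> short_to S' z -> short_to S z.
  move=> z S sub [p [dp lp hp]]; exists p; split => //; exact: (subsetP sub).
have inA'E : forall z, z \in A -> z \notin A' -> connect arc z x.
  by move=> z zA; rewrite !inE zA andbT negbK.
case: (classic (exists s, [/\ s \in A, connect arc s x & ~ short_to S' s])).
  move=> [s [sA csx ns]].
  exists (s |: S'); split.
  - by rewrite subUset sub1set sA sS'A.
  - move=> u v; rewrite !in_setU1 => /orP[/eqP -> | uS] /orP[/eqP -> | vS].
    + by rewrite eqxx.
    + move=> _ p dp lp; rewrite leqNgt; apply/negP => lt; apply: ns.
      exists p; split => //; [by rewrite lp | lia].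
    + move=> _ p /andP[pp _] lp; exfalso.
      have cus : connect arc u s by apply/connectP; exists p.
      by move: (S'nx u uS); rewrite (connect_trans cus csx).
    + exact: iS'.
  - move=> z zA; rewrite in_setU1 negb_or => /andP[nzs nzS].
    case zA': (z \in A'); first by apply: monoS (aS' z zA' nzS); exact: subsetUr.
    have czx := inA'E z zA (negbT zA').
    have [p [dp lp hp]] := claimA nzs (connect_trans czx (back s sA csx))
                                      (connect_trans csx (back z zA czx)).
    by exists p; split => //; rewrite lp setU11.
move=> nex; exists S'; split => //.
move=> z zA nzS; case zA': (z \in A'); first exact: aS'.
apply: NNPP => ns; apply: nex; exists z; split => //.
exact: inA'E z zA (negbT zA').
Qed.

End Kern.

Theorem corollary29 (V C : finType) (arc : rel V) (H : rel C) (rho : V -> V -> C)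
    (k : nat) :
  2 <= k ->
  local_tournament arc ->
  (forall x p, dicycle arc x p -> hlen_closed H rho x p <= k - 2) ->
  exists S : {set V}, kH_kernel arc H rho k S.
Proof.
move=> k2 [irr lt] hcyc.
have outT : forall x, tournament_on arc (fun y => arc x y) by move=> x; case: (lt x).
have cA := short_path k2 irr outT hcyc.
have [S [_ iS aS]] := @kernel_ind V C arc H rho k cA #|V| [set: V] (max_card _)
  (fun x y _ _ => in_setT y).
exists S; split; first exact: iS.
by move=> x xS; apply: aS; rewrite ?in_setT.
Qed.
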